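(* Let $H$ be a real or complex Hilbert space of dimension $n$, let $N\ge n$, let $F=\{f_i\}_{i=1}^N$ be a frame for $H$ and let $G=\{g_i\}_{i=1}^N$ be a dual frame of $F$. Let $\{q_i\}_{i=1}^N$ be the weight number sequence defined below. Then $$\mathcal{R}_1^p(F,G)=\max\{\,q_i\,|\langle f_i,g_i\rangle| : 1\le i\le N\,\}.$$
   Context: Inner products are linear in the first argument. A frame for the $n$-dimensional space $H$ is a finite sequence spanning $H$. Its analysis operator is $\Theta_F f=(\langle f,f_i\rangle)_{i=1}^N$ and its synthesis operator is $\Theta_F^*(c)=\sum_i c_if_i$. A dual frame of $F$ is a frame $G=\{g_i\}_{i=1}^N$ with $f=\sum_i\langle f,f_i\rangle g_i=\sum_i\langle f,g_i\rangle f_i$ for all $f\in H$. A probability sequence $\{p_i\}_{i=1}^N$ satisfies $0\le p_i\le 1$ and $\sum_i p_i=1$. The weight numbers are $q_i=\frac{\sum_{j=1}^N p_j}{\sum_{j=1}^N p_j-p_i}\cdot\frac{N-1}{n}$ (assumed well defined). For $1\le m\le N$, $\mathcal{D}_m^p$ is the set of $N\times N$ diagonal matrices $D$ for which there is $\Lambda\subseteq\{1,\dots,N\}$ with $|\Lambda|=m$, $D_{ii}=q_i$ for $i\in\Lambda$ and $D_{ii}=0$ otherwise. Thus $\Theta_G^*D\Theta_F f=\sum_{i\in\Lambda}q_i\langle f,f_i\rangle g_i$. Finally $\mathcal{R}_m^p(F,G)=\max\{\rho(\Theta_G^*D\Theta_F): D\in\mathcal{D}_m^p\}$, where $\rho$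 denotes spectral radius. *)

(* Defs.v *)
From HB Require Import structures.
From mathcomp Require Import all_boot all_order all_algebra.
Set Implicit Arguments. Unset Strict Implicit. Unset Printing Implicit Defensive.
Import Order.TTheory GRing.Theory Num.Theory.
Local Open Scope ring_scope.

(* Ambient scalars: C is an algebraically closed numeric field (e.g. complex
   numbers); vectors of the n-dimensional space H are row vectors 'rV[C]_n.
   The real case is modelled by vectors with real entries. *)

Section FrameDefs.
Variables (C : numClosedFieldType) (n N : nat).

Definition inner (x y : 'rV[C]_n) : C := \sum_(k < n) x 0 k * (y 0 k)^*.

Definition realvec (x : 'rV[C]_n) : bool := [forall k, x 0 k \is Num.real].

Definition is_frame (F : 'I_N -> 'rV[C]_n) : Prop :=
  forall f : 'rV[C]_n, exists c : 'I_N -> C, f = \sum_(i < N) c i *: F i.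

Definition is_real_frame (F : 'I_N -> 'rV[C]_n) : Prop :=
  (forall i, realvec (F i)) /\
  forall f : 'rV[C]_n, realvec f ->
    exists c : 'I_N -> C, (forall i, c i \is Num.real) /\
      f = \sum_(i < N) c i *: F i.

Definition dual_identities (F G : 'I_N -> 'rV[C]_n) (f : 'rV[C]_n) : Prop :=
  f = \sum_(i < N) inner f (F i) *: G i /\
  f = \sum_(i < N) inner f (G i) *: F i.

Definition is_dual_frame (F G : 'I_N -> 'rV[C]_n) : Prop :=
  is_frame G /\ forall f, dual_identities F G f.

Definition is_real_dual_frame (F G : 'I_N -> 'rV[C]_n) : Prop :=
  is_real_frame G /\ forall f, realvec f -> dual_identities F G f.

Definition is_prob_seq (p : 'I_N -> C) : Prop :=
  (forall i, 0 <= p i <= 1) /\ \sum_(i < N) p i = 1.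

Definition weight (p : 'I_N -> C) (i : 'I_N) : C :=
  (\sum_(j < N) p j) / (\sum_(j < N) p j - p i) * ((N.-1)%:R / n%:R).

Definition weight_well_defined (p : 'I_N -> C) : Prop :=
  (0 < n)%N /\ forall i, \sum_(j < N) p j - p i != 0.

(* the operator Theta_G^* D Theta_F for D in D_m^p with support L *)
Definition GDF (q : 'I_N -> C) (F G : 'I_N -> 'rV[C]_n) (L : {set 'I_N})
  (f : 'rV[C]_n) : 'rV[C]_n :=
  \sum_(i in L) (q i * inner f (F i)) *: G i.

End FrameDefs.

(* eigenvalues (with multiplicity) of a square matrix over a closed field:
   the roots of its characteristic polynomial *)
Definition eigvals (C : numClosedFieldType) (d : nat) (A : 'M[C]_d) : seq C :=
  sval (closed_field_poly_normal (char_poly A)).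

Definition spectral_radius (C : numClosedFieldType) (d : nat) (A : 'M[C]_d) : C :=
  \big[Num.max/0]_(z <- eigvals A) `|z|.

Definition op_spectral_radius (C : numClosedFieldType) (n : nat)
  (T : 'rV[C]_n -> 'rV[C]_n) : C := spectral_radius (lin1_mx T).

Definition Rmp (C : numClosedFieldType) (n N m : nat) (p : 'I_N -> C)
  (F G : 'I_N -> 'rV[C]_n) : C :=
  \big[Num.max/0]_(L : {set 'I_N} | #|L| == m)
     op_spectral_radius (GDF (weight n p) F G L).

(* Main.v *)
Require Import Defs.
From HB Require Import structures.
From mathcomp Require Import all_boot all_order all_algebra.
Import Order.TTheory GRing.Theory Num.Theory.
Local Open Scope ring_scope.

Section Aux.
Variable C : numClosedFieldType.

Lemma bmax_ge0 (I : Type) (r : seq I) (P : pred I) (F : I -> C) :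
  (forall i, P i -> 0 <= F i) -> 0 <= \big[Num.max/0]_(i <- r | P i) F i.
Proof.
move=> H; apply: (big_ind (fun x => 0 <= x)) => // x y hx hy.
rewrite comparable_le_max ?hx //; exact: real_comparable (ger0_real hx) (ger0_real hy).
Qed.

Lemma bmax_le (I : Type) (r : seq I) (P : pred I) (F : I -> C) m :
  0 <= m -> (forall i, P i -> 0 <= F i <= m) ->
  \big[Num.max/0]_(i <- r | P i) F i <= m.
Proof.
move=> m0 H.
suff: 0 <= \big[Num.max/0]_(i <- r | P i) F i <= m by case/andP.
apply: (big_ind (fun x => 0 <= x <= m)); first by rewrite lexx m0.
  move=> x y /andP[x0 xm] /andP[y0 ym].
  have cxy : x >=< y by exact: real_comparable (ger0_real x0) (ger0_real y0).
  by rewrite comparable_le_max ?x0 // comparable_ge_max ?xm ?ym.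
exact: H.
Qed.

Lemma bmax_ge (I : eqType) (r : seq I) (P : pred I) (F : I -> C) j :
  (forall i, P i -> 0 <= F i) -> j \in r -> P j ->
  F j <= \big[Num.max/0]_(i <- r | P i) F i.
Proof.
move=> H; elim: r => [|a r IH] //=.
rewrite in_cons big_cons => /orP[/eqP ->|jr] Pj.
  rewrite Pj.
  have h1 := H _ Pj; have h2 := @bmax_ge0 _ r _ _ H.
  have cxy : F a >=< \big[Num.max/0]_(i <- r | P i) F i
    by exact: real_comparable (ger0_real h1) (ger0_real h2).
  by rewrite comparable_le_max ?lexx.
case: ifP => Pa; last exact: IH.
have h1 := H _ Pa; have h2 := @bmax_ge0 _ r _ _ H.
have cxy : F a >=< \big[Num.max/0]_(i <- r | P i) F i
    by exact: real_comparable (ger0_real h1) (ger0_real h2).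
by rewrite comparable_le_max ?IH ?orbT.
Qed.

Lemma sr_ge0 d (A : 'M[C]_d) : 0 <= spectral_radius A.
Proof. by apply: bmax_ge0 => i _; exact: normr_ge0. Qed.

Lemma eigvals_root d (A : 'M[C]_d) z : (z \in eigvals A) = root (char_poly A) z.
Proof.
rewrite /eigvals; case: closed_field_poly_normal => s /= ->.
by rewrite (monicP (char_poly_monic A)) scale1r root_prod_XsubC.
Qed.

Lemma eig_rank1 d (u v : 'rV[C]_d) z :
  eigenvalue (u^T *m v) z -> z = 0 \/ z = (v *m u^T) 0 0.
Proof.
have key : forall x : 'rV[C]_d, x *m (u^T *m v) = (x *m u^T) 0 0 *: v.
  by move=> x; rewrite mulmxA {1}[x *m u^T]mx11_scalar mul_scalar_mx.
case/eigenvalueP => x; rewrite key => xB xnz.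
have [->|z0] := eqVneq z 0; first by left.
right.
set c := (x *m u^T) 0 0 in xB.
have ex : x = (z^-1 * c) *: v by rewrite -scalerA xB scalerA mulVf // scale1r.
have c0 : c != 0.
  by apply: contraNneq xnz => c0; rewrite ex c0 mulr0 scale0r.
have : c = z^-1 * c * (v *m u^T) 0 0.
  by rewrite {1}/c {1}ex -scalemxAl mxE.
move=> h.
have : c * z = c * (v *m u^T) 0 0.
  by rewrite mulrC {1}h !mulrA mulfV // mul1r.
by move/(mulfI c0).
Qed.

Lemma sr_rank1 d (u v : 'rV[C]_d) :
  spectral_radius (u^T *m v) = `|(v *m u^T) 0 0|.
Proof.
set t := (v *m u^T) 0 0.
have key : forall x : 'rV[C]_d, x *m (u^T *m v) = (x *m u^T) 0 0 *: v.
  by move=> x; rewrite mulmxA {1}[x *m u^T]mx11_scalar mul_scalar_mx.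
apply/le_anti/andP; split.
  rewrite /spectral_radius big_seq.
  apply: bmax_le => // z zin; rewrite normr_ge0 /=.
  move: zin; rewrite eigvals_root -eigenvalue_root_char.
  by case/eig_rank1 => ->; rewrite ?normr0 ?lexx.
have [->|t0] := eqVneq t 0; first by rewrite normr0 sr_ge0.
apply: (@bmax_ge _ _ _ (fun z => `|z|)) => //.
rewrite eigvals_root -eigenvalue_root_char; apply/eigenvalueP; exists v.
  by rewrite key.
apply/eqP => v0; move/eqP: t0; apply; by rewrite /t v0 mul0mx mxE.
Qed.

Lemma main_gen n N (F G : 'I_N -> 'rV[C]_n) (p : 'I_N -> C) :
  (forall i, 0 <= weight n p i) ->
  Rmp 1 p F G = \big[Num.max/0]_(i < N) (weight n p i * `|inner (F i) (G i)|).
Proof.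
move=> w0.
set B := fun i => (weight n p i *: map_mx (fun x : C => x^*) (F i))^T *m G i.
have hT : forall i x, GDF (weight n p) F G [set i] x = x *m B i.
  move=> i x; rewrite /GDF big_set1 /B mulmxA.
  rewrite [x *m _]mx11_scalar mul_scalar_mx; congr (_ *: _).
  rewrite !mxE /inner mulr_sumr; apply: eq_bigr => k _.
  by rewrite !mxE mulrCA.
have hL : forall i, lin1_mx (GDF (weight n p) F G [set i]) = B i.
  move=> i; apply/matrixP => a b; rewrite mxE hT.
  by rewrite -rowE mxE.
have hS : forall i, op_spectral_radius (GDF (weight n p) F G [set i])
    = weight n p i * `|inner (F i) (G i)|.
  move=> i; rewrite /op_spectral_radius hL /B sr_rank1.
  suff -> : (G i *m (weight n p i *: map_mx (fun x : C => x^*) (F i))^T) 0 0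
     = weight n p i * (inner (F i) (G i))^*.
    by rewrite normrM norm_conjC ger0_norm.
  rewrite mxE /inner rmorph_sum mulr_sumr; apply: eq_bigr => k _.
  by rewrite !mxE rmorphM /= conjCK mulrCA [G i 0 k * _]mulrC.
have r0 : forall i : 'I_N, 0 <= weight n p i * `|inner (F i) (G i)|.
  by move=> i; rewrite mulr_ge0.
apply/le_anti/andP; split.
  apply: bmax_le; first by apply: bmax_ge0.
  move=> L /cards1P [i ->]; rewrite hS r0 /=.
  by apply: (@bmax_ge _ _ _ (fun i => weight n p i * `|inner (F i) (G i)|)) => //;
     rewrite mem_index_enum.
apply: bmax_le; first by apply: bmax_ge0 => L _; exact: sr_ge0.
move=> i _; rewrite r0 /= -hS.
apply: (@bmax_ge _ _ _ (fun L => op_spectral_radius (GDF (weight n p) F G L))).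
- by move=> L _; exact: sr_ge0.
- by rewrite mem_index_enum.
- by rewrite cards1.
Qed.

Lemma weight_ge0 n N (p : 'I_N -> C) :
  is_prob_seq p -> weight_well_defined n p -> forall i, 0 <= weight n p i.
Proof.
case=> hp s1 [_ hw] i; rewrite /weight s1.
have := hw i; rewrite s1 => h.
have /andP[_ pi1] := hp i.
have h1 : 0 < 1 - p i by rewrite lt0r h subr_ge0 pi1.
by apply: mulr_ge0; apply: divr_ge0; rewrite ?ler01 ?ler0n ?ltW.
Qed.
End Aux.

Theorem proposition3p1 :
  (* complex Hilbert space C^n *)
  (forall (C : numClosedFieldType) (n N : nat) (F G : 'I_N -> 'rV[C]_n)
      (p : 'I_N -> C),
    (n <= N)%N -> is_frame F -> is_dual_frame F G ->
    is_prob_seq p -> weight_well_defined n p ->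
    Rmp 1 p F G = \big[Num.max/0]_(i < N) (weight n p i * `|inner (F i) (G i)|))
  /\
  (* real Hilbert space R^n (vectors with real entries) *)
  (forall (C : numClosedFieldType) (n N : nat) (F G : 'I_N -> 'rV[C]_n)
      (p : 'I_N -> C),
    (n <= N)%N -> is_real_frame F -> is_real_dual_frame F G ->
    is_prob_seq p -> weight_well_defined n p ->
    Rmp 1 p F G = \big[Num.max/0]_(i < N) (weight n p i * `|inner (F i) (G i)|)).
Proof.
split=> C n N F G p _ _ _ hp hw; apply: main_gen; exact: weight_ge0.
Qed.
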